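(* Let $d\in\{1,2\}$ and $N\ge1$. Then $$E_Q(K(N)^2)=\sum_{n=0}^N\ \sum_{1\le i_1<\cdots<i_n\le N}c^{2n}_{N,d}\sum_{x_1,\dots,x_n\in\mathbb{Z}^d}\ \prod_{k=1}^n p_0^2(i_k-i_{k-1},x_k-x_{k-1})\left(\sum_{x\in\mathbb{Z}^d}|x|^2p_0(N-i_n,x-x_n)\right)^2,$$ with the conventions $i_0=0$, $x_0=0$.
   Context: $P^N_0$ is the uniform probability measure on nearest-neighbour walks $\omega:\{0,\dots,N\}\to\mathbb{Z}^d$ with $\omega(0)=0$, $|\omega(n)-\omega(n-1)|=1$; $p_0(n,x)$ is the probability that simple random walk on $\mathbb{Z}^d$ started at $0$ is at $x$ at time $n$. The environment $h=\{h(n,x)\}$ is i.i.d. with $h(n,x)=\pm1$ each with probability $1/2$ on $(H,\mathcal{G},Q)$, independent of the walk; $E_Q$ is expectation under $Q$. $c_{N,d}>0$ are the scaling constants (with $\lim c_{N,1}^2N^{1/2}=0$ for $d=1$, $\lim c_{N,2}^2\log N=0$ for $d=2$). $K(N)=\int\prod_{n=1}^N[1+c_{N,d}h(n,\omega(n))]\,|\omega(N)|^2\,dP^N_0(\omega)$. *)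

(* Defs.v *)
From HB Require Import structures.
From mathcomp Require Import all_boot all_order all_algebra.
From mathcomp Require Import all_classical all_reals all_analysis.
Set Implicit Arguments. Unset Strict Implicit. Unset Printing Implicit Defensive.
Import Order.TTheory GRing.Theory Num.Theory.
Local Open Scope ring_scope.
Local Open Scope classical_set_scope.

(* A nearest-neighbour step: +- e_j, encoded by (j, sign). *)
Definition step (d : nat) (s : 'I_d * bool) : 'rV[int]_d :=
  if s.2 then delta_mx 0 s.1 else - delta_mx 0 s.1.

(* A nearest-neighbour walk of length N started at 0 is determined by its
   sequence of steps f : {ffun 'I_N -> 'I_d * bool}; its position at time n
   is omega(n) = sum of the first n steps. This is a bijection between step
   sequences and walks, so the uniform measure P^N_0 on walks is the uniform
   measure on step sequences. *)
Definition wpos (d N : nat) (f : {ffun 'I_N -> 'I_d * bool}) (n : nat)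
  : 'rV[int]_d := \sum_(i < N | (i < n)%N) step (f i).

Definition sqnorm (R : realType) (d : nat) (x : 'rV[int]_d) : R :=
  \sum_(j < d) ((x 0 j)%:~R) ^+ 2.

Definition p0 (R : realType) (d n : nat) (x : 'rV[int]_d) : R :=
  (#|[pred f : {ffun 'I_n -> 'I_d * bool} | wpos f n == x]|)%:R
    / ((2 * d) ^ n)%:R.

Definition Kfun (R : realType) (Omega : Type) (d : nat) (c : R)
  (h : nat -> 'rV[int]_d -> Omega -> R) (N : nat) (w : Omega) : R :=
  ((2 * d) ^ N)%:R^-1 *
  \sum_(f : {ffun 'I_N -> 'I_d * bool})
     (\prod_(1 <= n < N.+1) (1 + c * h n (wpos f n) w)) * sqnorm R (wpos f N).

(* h = {h(n,x)} is an i.i.d. family of +-1 valued random variables, each equal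
   to 1 or -1 with probability 1/2: every h(n,x) is measurable with values in
   {1,-1}, and for every finite family of distinct indices and prescribed signs
   the joint probability is 2^-(size of family) (i.e. mutual independence with
   uniform marginals). *)
Definition iid_pm1 (dm : measure_display) (Omega : measurableType dm)
  (R : realType) (P : probability Omega R) (d : nat)
  (h : nat -> 'rV[int]_d -> Omega -> R) : Prop :=
  [/\ (forall n x, measurable_fun setT (h n x)),
      (forall n x w, h n x w = 1 \/ h n x w = -1) &
      (forall (s : seq (nat * 'rV[int]_d)) (e : nat * 'rV[int]_d -> bool),
          uniq s ->
          P [set w | forall i, i \in s -> h i.1 i.2 w = (if e i then 1 else -1)]
          = ((2 : R) ^- size s)%:E)].

(* conventions i_0 = 0, x_0 = 0: the k-th entry (k >= 1) of 0 :: t *)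
Definition iext (N n : nat) (t : n.-tuple 'I_N.+1) (k : nat) : nat :=
  nth 0%N (0%N :: map val t) k.
Definition xext (d n : nat) (t : n.-tuple 'rV[int]_d) (k : nat) : 'rV[int]_d :=
  nth 0 (0 :: val t) k.

Definition rhs3 (R : realType) (d N : nat) (c : R) : \bar R :=
  (\sum_(0 <= n < N.+1)
     \sum_(t : n.-tuple 'I_N.+1 | sorted ltn (0%N :: map (@nat_of_ord N.+1) t))
       ((c ^+ (2 * n))%:E *
        \esum_(xs in [set: n.-tuple 'rV[int]_d])
          ((\prod_(1 <= k < n.+1)
               p0 R (iext t k - iext t k.-1) (xext xs k - xext xs k.-1) ^+ 2)%:E *
           ((\esum_(y in [set: 'rV[int]_d])
               (sqnorm R y * p0 R (N - iext t n) (y - xext xs n))%:E) *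
            (\esum_(y in [set: 'rV[int]_d])
               (sqnorm R y * p0 R (N - iext t n) (y - xext xs n))%:E)))))%E.

(* Main.v *)
Require Import Defs.
From HB Require Import structures.
From mathcomp Require Import all_boot all_order all_algebra.
From mathcomp Require Import all_classical all_reals all_analysis.
From mathcomp.algebra_tactics Require Import ring lra.
From mathcomp Require Import zify.
Import Order.TTheory GRing.Theory Num.Theory numFieldNormedType.Exports.
Set Implicit Arguments. Unset Strict Implicit.
Local Open Scope ring_scope.
Local Open Scope classical_set_scope.
Section Walks.
Variables (R : realType) (d : nat).
Local Notation St := ('I_d * bool)%type.

Fixpoint SW (n : nat) (G : seq St -> R) : R :=
  if n is k.+1 then \sum_(s : St) SW k (fun l => G (s :: l)) else G [::].

Definition pos (l : seq St) (k : nat) : 'rV[int]_d := \sum_(s <- take k l) step s.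

Lemma SW_ext n F G : (forall l, size l = n -> F l = G l) -> SW n F = SW n G.
Proof.
elim: n F G => [|n IH] F G H /=; first exact: H.
apply: eq_bigr => s _; apply: IH => l Hl; apply: H; by rewrite /= Hl.
Qed.

Lemma SW_lin n a F : SW n (fun l => a * F l) = a * SW n F.
Proof.
elim: n F => [|n IH] F //=; rewrite mulr_sumr; apply: eq_bigr => s _; exact: IH.
Qed.

Lemma SW_cat a b F : SW (a + b) F = SW a (fun l1 => SW b (fun l2 => F (l1 ++ l2))).
Proof. elim: a F => [|a IH] F //=; apply: eq_bigr => s _; exact: IH. Qed.

Lemma SW_sum n (I : Type) (r : seq I) F :
  SW n (fun l => \sum_(i <- r) F i l) = \sum_(i <- r) SW n (F i).
Proof.
elim: n F => [|n IH] F //=.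
rewrite exchange_big /=; apply: eq_bigr => s _.
exact: (IH (fun i l => F i (s :: l))).
Qed.

Lemma SW_tuple n (G : seq St -> R) : \sum_(t : n.-tuple St) G t = SW n G.
Proof.
elim: n G => [|n IH] G /=.
  rewrite (eq_bigr (fun _ => G [::])); last by move=> t _; rewrite tuple0.
  by rewrite sumr_const card_tuple expn0.
rewrite (reindex (fun p : St * n.-tuple St => [tuple of p.1 :: p.2])) /=; last first.
  exists (fun t : n.+1.-tuple St => (thead t, [tuple of behead t])).
    by move=> [x t] _ /=; congr pair; apply: val_inj.
  by move=> t _; rewrite [in RHS](tuple_eta t).
rewrite -(pair_big xpredT xpredT (fun x (t : n.-tuple St) => G (x :: t))) /=.
apply: eq_bigr => s _; rewrite -IH; apply: eq_bigr => t _; done.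
Qed.

Lemma SW_ffun N (G : seq St -> R) : \sum_(f : {ffun 'I_N -> St}) G (val (fgraph f)) = SW N G.
Proof.
rewrite (reindex (@Finfun _ _)); last first.
  by exists (@fgraph _ _) => x _; [exact: FinfunK | exact: fgraphK]. idtac.
rewrite (eq_bigr (fun t => G (val t))); last by move=> t _; rewrite FinfunK.
rewrite (SW_tuple _ (fun t => G t)).
by rewrite card_ord.
Qed.

Lemma sum_take_enum (V : zmodType) N k (F : 'I_N -> V) :
  \sum_(i <- take k (enum 'I_N)) F i = \sum_(i < N | (i < k)%N) F i.
Proof.
have Henum : enum 'I_N = index_enum 'I_N.
  by rewrite enumT /index_enum unlock.
rewrite [RHS]big_mkcond /= -Henum.
rewrite -[in RHS](cat_take_drop k (enum 'I_N)) big_cat /=.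
rewrite [X in _ = _ + X]big1_seq ?addr0; last first.
  move=> i /andP[_ Hi]; have : val i \in map val (drop k (enum 'I_N)) by apply: map_f.
  rewrite map_drop val_enum_ord drop_iota mem_iota add0n => /andP[Hk _].
  by rewrite ltnNge Hk.
rewrite big_seq_cond [RHS]big_seq_cond; apply: eq_bigr => i /andP[Hi _].
have : val i \in map val (take k (enum 'I_N)) by apply: map_f.
rewrite map_take val_enum_ord take_iota mem_iota add0n => /andP[_ Hk].
by rewrite (leq_trans Hk (geq_minl _ _)).
Qed.

Lemma wpos_pos N (f : {ffun 'I_N -> St}) k : wpos f k = pos (val (fgraph f)) k.
Proof.
rewrite /pos fgraph_codom /= codomE -map_take big_map.
by rewrite sum_take_enum.
Qed.

Lemma card_sum (T : finType) (P : pred T) : (#|P|%:R : R) = \sum_(t : T) (P t)%:R.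
Proof.
rewrite -sum1_card natr_sum big_mkcond /=; apply: eq_bigr => t _.
by rewrite unfold_in; case: (P t).
Qed.

Lemma p0E m x : p0 R m x = SW m (fun l => (pos l m == x)%:R) / ((2 * d) ^ m)%:R.
Proof.
rewrite /p0 (@card_sum _ [pred f : {ffun 'I_m -> St} | wpos f m == x]) /=; congr (_ / _).
rewrite -(SW_ffun m (fun l => (pos l m == x)%:R)); apply: eq_bigr => f _.
by rewrite wpos_pos.
Qed.

Lemma pos_cat l1 l2 k : (size l1 <= k)%N ->
  pos (l1 ++ l2) k = pos l1 (size l1) + pos l2 (k - size l1).
Proof.
move=> Hk; rewrite /pos take_cat ltnNge Hk /= big_cat /= take_size //.
Qed.

Lemma pos_cat_le l1 l2 k : (k <= size l1)%N -> pos (l1 ++ l2) k = pos l1 k.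
Proof.
move=> Hk; rewrite /pos take_cat.
case: ltnP => H //; have -> : k = size l1 by apply/eqP; rewrite eqn_leq Hk H.
by rewrite subnn take0 cats0 take_size.
Qed.

Lemma pos0 l : pos l 0 = 0.
Proof. by rewrite /pos take0 big_nil. Qed.

End Walks.
Section Markov.
Variables (R : realType) (d N : nat).
Hypothesis hd : (0 < d)%N.
Local Notation St := ('I_d * bool)%type.
Local Notation D := (((2 * d)%N)%:R : R).

Lemma D_neq0 : D != 0.
Proof. by rewrite pnatr_eq0 muln_eq0 /= -lt0n hd. Qed.

Lemma DX_neq0 m : D ^+ m != 0.
Proof. exact: expf_neq0 D_neq0. Qed.

Fixpoint Mk (a : nat) (z : 'rV[int]_d) (js : seq nat) (xs : seq 'rV[int]_d) : R :=
  match js, xs with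
  | j :: js', x :: xs' => p0 R (j - a) (x - z) * Mk j x js' xs'
  | _, _ => (D ^+ (N - a))^-1 * SW (N - a) (fun l : seq St => sqnorm R (z + pos l (N - a)))
  end.

Lemma eqz (z p x : 'rV[int]_d) : (z + p == x) = (p == x - z).
Proof.
by apply/eqP/eqP => H; [rewrite -H (addrC z) addrK | rewrite H addrC subrK].
Qed.

Lemma prod_zip_ext (js : seq nat) (xs : seq 'rV[int]_d) (F G : nat -> 'rV[int]_d -> R) :
  (forall j x, j \in js -> F j x = G j x) ->
  \prod_(p <- zip js xs) F p.1 p.2 = \prod_(p <- zip js xs) G p.1 p.2.
Proof.
elim: js xs => [|j js IH] [|x xs] H /=; rewrite ?big_nil //.
rewrite !big_cons H ?mem_head // IH // => j' x' Hj'.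
by apply: H; rewrite in_cons Hj' orbT.
Qed.

Lemma markov js xs a z : size js = size xs -> path ltn a js ->
  all (fun j => j <= N)%N js -> (a <= N)%N ->
  (D ^+ (N - a))^-1 * SW (N - a) (fun l : seq St =>
     (\prod_(p <- zip js xs) (z + pos l (p.1 - a) == p.2)%:R) *
       sqnorm R (z + pos l (N - a))) = Mk a z js xs.
Proof.
elim: js xs a z => [|j js IH] [|x xs] a z //=.
  by move=> _ _ _ _; congr (_ * _); apply: SW_ext => l _; rewrite big_nil mul1r.
move=> [Hs] /andP[Haj Hp] /andP[HjN Hall] HaN.
have e : (N - a = (j - a) + (N - j))%N by lia.
have Hgt : all (fun j' => j < j')%N js by exact: (order_path_min ltn_trans Hp).
rewrite e SW_cat.
rewrite (_ : SW _ _ = SW (j - a) (fun l1 : seq St => (pos l1 (j - a) == x - z)%:R *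
     (D ^+ (N - j) * Mk j x js xs))); last first.
  apply: SW_ext => l1 Hl1.
  rewrite -(IH xs j x Hs Hp Hall HjN) [X in _ * X]mulrA mulfV ?DX_neq0 // mul1r -SW_lin.
  apply: SW_ext => l2 Hl2; rewrite big_cons /= pos_cat_le ?Hl1 // eqz.
  case: eqVneq => Hpz; last by rewrite !mul0r.
  rewrite !mul1r; congr (_ * _); last first.
    rewrite pos_cat Hl1 ?leq_addr //.
    have -> : (j - a + (N - j) - (j - a) = N - j)%N by lia.
    rewrite Hpz (addrA z) (addrC z (x - z)) subrK //.
  apply: (@prod_zip_ext _ _ (fun j' x' => (z + pos (l1 ++ l2) (j' - a) == x')%:R)
     (fun j' x' => (x + pos l2 (j' - j) == x')%:R)) => j' x' Hj'.
  have Hjj : (j < j')%N by move/allP: Hgt => /(_ _ Hj').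
  rewrite pos_cat ?Hl1; last by rewrite leq_sub2r // ltnW.
  rewrite Hpz (addrA z) (addrC z (x - z)) subrK.
  by rewrite -subnDA subnKC // ltnW.
rewrite (_ : SW _ _ = (D ^+ (N - j) * Mk j x js xs) *
   SW (j - a) (fun l1 : seq St => (pos l1 (j - a) == x - z)%:R)); last first.
  by rewrite -SW_lin; apply: SW_ext => l _; rewrite mulrC.
rewrite p0E natrX exprD.
have h1 := DX_neq0 (j - a); have h2 := DX_neq0 (N - j).
field.
by rewrite h1 h2.
Qed.

End Markov.
Section Esums.
Variables (R : realType) (d N : nat).
Hypothesis hd : (0 < d)%N.
Local Notation St := ('I_d * bool)%type.
Local Notation D := (((2 * d)%N)%:R : R).

Lemma sqnorm_ge0 (x : 'rV[int]_d) : 0 <= sqnorm R x.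
Proof. by apply: sumr_ge0 => j _; apply: sqr_ge0. Qed.

Lemma D_gt0 : 0 < D.
Proof. by rewrite ltr0n muln_gt0 hd. Qed.

Lemma DXV_ge0 m : 0 <= (D ^+ m)^-1.
Proof. by rewrite invr_ge0 exprn_ge0 // ltW // D_gt0. Qed.

Lemma esum_pt (T : choiceType) (a : T -> \bar R) y0 :
  (forall y, y != y0 -> a y = 0%E) -> (0 <= a y0)%E ->
  \esum_(y in [set: T]) a y = a y0.
Proof.
move=> H0 H1; rewrite -(esum_set1 H1) [RHS]esum_mkcond.
apply: eq_esum => y _; case: (eqVneq y y0) => [->|Hy].
  by rewrite mem_set.
rewrite H0 // ifF //; apply/negbTE; rewrite notin_setE /=.
by move=> Hy'; rewrite Hy' eqxx in Hy.
Qed.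

Lemma Mk_prod js xs a z : size js = size xs ->
  @Mk R d N a z js xs = (\prod_(1 <= k < (size js).+1)
      p0 R (nth 0 (a :: js) k - nth 0 (a :: js) k.-1)%N
           (nth 0 (z :: xs) k - nth 0 (z :: xs) k.-1)) *
    @Mk R d N (last a js) (last z xs) [::] [::].
Proof.
elim: js xs a z => [|j js IH] [|x xs] a z //=.
  by move=> _; rewrite big_geq // mul1r.
move=> [Hs]; rewrite big_nat_recl //= (IH xs j x Hs) mulrA; congr (_ * _ * _).
by apply: eq_big_nat => k /andP[Hk _]; case: k Hk.
Qed.

Lemma esum_B m (x : 'rV[int]_d) :
  \esum_(y in [set: 'rV[int]_d]) (sqnorm R y * p0 R m (y - x))%:E =
  ((D ^+ m)^-1 * SW m (fun l : seq St => sqnorm R (x + pos l m)))%:E.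
Proof.
under eq_esum => y _.
  rewrite p0E -SW_tuple mulrCA mulr_suml -sumEFin.
  over.
rewrite esum_sum; last first.
  move=> y u _ _; rewrite lee_fin natrX mulr_ge0 ?ler0n //.
  by rewrite mulr_ge0 ?sqnorm_ge0 // DXV_ge0.
rewrite -SW_tuple mulr_sumr -sumEFin; apply: eq_bigr => u _.
rewrite (esum_pt (y0 := x + pos u m)).
- by rewrite [x + _ - x]addrC addKr eqxx natrX mul1r mulrC.
- move=> y Hy; rewrite (_ : (pos u m == y - x) = false) ?mul0r //.
  apply/negbTE; apply: contra Hy => /eqP ->; by rewrite addrC subrK.
- by rewrite lee_fin [x + _ - x]addrC addKr eqxx natrX mul1r mulr_ge0 ?sqnorm_ge0 ?DXV_ge0.
Qed.


Lemma prod_zip_ind (F : nat -> 'rV[int]_d) js xs : size js = size xs ->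
  \prod_(p <- zip js xs) (F p.1 == p.2)%:R = ((xs == map F js)%:R : R).
Proof.
elim: js xs => [|j js IH] [|x xs] //=; first by rewrite big_nil.
move=> [Hs]; rewrite big_cons IH // eqseq_cons eq_sym.
by case: (x == F j); rewrite ?mul1r ?mul0r.
Qed.

Lemma prod_zip_map (G : nat -> 'rV[int]_d -> R) (F : nat -> 'rV[int]_d) js :
  \prod_(p <- zip js (map F js)) G p.1 p.2 = \prod_(j <- js) G j (F j).
Proof. by elim: js => [|j js IH] /=; rewrite ?big_nil ?big_cons ?IH. Qed.

Definition Tval (js : seq nat) (xs : seq 'rV[int]_d) : R :=
  (D ^+ N)^-1 * SW N (fun l : seq St =>
     (\prod_(p <- zip js xs) (pos l p.1 == p.2)%:R) * sqnorm R (pos l N)).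

Lemma sq_sum (a : R) (f : N.-tuple St -> R) :
  (a * \sum_(u : N.-tuple St) f u) ^+ 2 =
  \sum_(u : N.-tuple St) \sum_(v : N.-tuple St) a ^+ 2 * (f u * f v).
Proof.
rewrite expr2 mulrACA -expr2 mulr_suml mulr_sumr; apply: eq_bigr => u _.
by rewrite !mulr_sumr.
Qed.

Lemma ind_ge0 (b : bool) : 0 <= (b%:R : R).
Proof. by case: b. Qed.

Lemma prod_ind_ge0 (I : Type) (r : seq I) (F : I -> bool) :
  0 <= \prod_(i <- r) ((F i)%:R : R).
Proof. by apply: prodr_ge0 => i _; exact: ind_ge0. Qed.

Lemma esum_T n (js : seq nat) : size js = n ->
  \esum_(xs in [set: n.-tuple 'rV[int]_d]) ((Tval js xs) ^+ 2)%:E =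
  (\sum_(u : N.-tuple St) \sum_(v : N.-tuple St)
     (D ^+ N)^-1 ^+ 2 * (sqnorm R (pos u N) * sqnorm R (pos v N)) *
     \prod_(j <- js) (pos u j == pos v j)%:R)%:E.
Proof.
move=> Hjs.
under eq_esum => xs _.
  rewrite /Tval -SW_tuple sq_sum -sumEFin.
  under eq_bigr => u _ do rewrite -sumEFin.
  over.
rewrite esum_sum; last first.
  move=> xs u _ _; apply: sume_ge0 => v _; rewrite lee_fin.
  by rewrite mulr_ge0 ?exprn_ge0 ?DXV_ge0 // mulr_ge0 ?mulr_ge0 ?prod_ind_ge0 ?sqnorm_ge0.
rewrite -sumEFin; apply: eq_bigr => u _.
rewrite esum_sum; last first.
  move=> xs v _ _; rewrite lee_fin.
  by rewrite mulr_ge0 ?exprn_ge0 ?DXV_ge0 // mulr_ge0 ?mulr_ge0 ?prod_ind_ge0 ?sqnorm_ge0.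
rewrite -sumEFin; apply: eq_bigr => v _.
have Hsz : size (map (pos u) js) == n by rewrite size_map Hjs.
rewrite (esum_pt (y0 := Tuple Hsz)).
- rewrite /= prod_zip_ind ?size_map // eqxx mul1r (@prod_zip_map (fun j x => (pos v j == x)%:R)).
  congr (_%:E); rewrite (eq_bigr (fun j => (pos u j == pos v j)%:R)); last first.
    by move=> j _; rewrite eq_sym.
  ring.
- move=> xs Hxs; rewrite prod_zip_ind ?size_tuple //.
  rewrite (_ : (val xs == map (pos u) js) = false) ?mul0r ?mulr0 //.
  apply/negbTE; apply: contra Hxs => /eqP Hx; apply/eqP; exact: val_inj.
- rewrite lee_fin.
  by rewrite mulr_ge0 ?exprn_ge0 ?DXV_ge0 // mulr_ge0 ?mulr_ge0 ?prod_ind_ge0 ?sqnorm_ge0.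
Qed.

End Esums.
Section Expand.
Variables (R : realType) (N : nat) (x : nat -> R).

Definition Ssum (a k : nat) : R :=
  \sum_(t : k.-tuple 'I_N.+1 | sorted ltn (a :: map (@nat_of_ord N.+1) t))
     \prod_(j <- map (@nat_of_ord N.+1) t) x j.

Lemma tuple_cons_sum (T : finType) k (P : pred (seq T)) (F : seq T -> R) :
  \sum_(t : k.+1.-tuple T | P t) F t =
  \sum_(i : T) \sum_(t : k.-tuple T | P (i :: t)) F (i :: t).
Proof.
rewrite (reindex (fun p : T * k.-tuple T => [tuple of p.1 :: p.2])) /=; last first.
  exists (fun t : k.+1.-tuple T => (thead t, [tuple of behead t])).
    by move=> [y t] _ /=; congr pair; apply: val_inj.
  by move=> t _; rewrite [in RHS](tuple_eta t).
rewrite (pair_big_dep xpredT (fun i (t : k.-tuple T) => P (i :: t))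
   (fun i (t : k.-tuple T) => F (i :: t))) /=.
by [].
Qed.

Lemma Ssum0 a : Ssum a 0 = 1.
Proof.
rewrite /Ssum (eq_bigl xpredT); last by move=> t; rewrite tuple0.
rewrite (eq_bigr (fun _ => 1)); last by move=> t _; rewrite tuple0 big_nil.
by rewrite sumr_const card_tuple expn0.
Qed.

Lemma SsumS a k : Ssum a k.+1 = \sum_(i < N.+1 | (a < i)%N) x i * Ssum i k.
Proof.
rewrite /Ssum (@tuple_cons_sum _ k (fun l : seq 'I_N.+1 => sorted ltn (a :: map (@nat_of_ord N.+1) l))
   (fun l : seq 'I_N.+1 => \prod_(j <- map (@nat_of_ord N.+1) l) x j)).
rewrite [RHS]big_mkcond /=; apply: eq_bigr => i _.
case: ifP => Hai /=.
  by rewrite mulr_sumr; apply: eq_bigr => t _; rewrite big_cons.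
by rewrite big_pred0.
Qed.

Lemma tele k : forall a, (N - a = k)%N ->
  \prod_(a.+1 <= n < N.+1) (1 + x n) =
  1 + \sum_(a.+1 <= i < N.+1) x i * \prod_(i.+1 <= n < N.+1) (1 + x n).
Proof.
elim: k => [|k IH] a Hk.
  by rewrite !big_geq ?addr0 //; lia.
rewrite big_ltn; last by lia.
rewrite [X in _ = 1 + X]big_ltn; last by lia.
have HP := IH a.+1 ltac:(lia).
rewrite mulrDl mul1r {1}HP.
ring.
Qed.

Lemma expand M : forall a, (N - a <= M)%N ->
  \sum_(k < M.+1) Ssum a k = \prod_(a.+1 <= n < N.+1) (1 + x n).
Proof.
elim: M => [|M IH] a Ha.
  by rewrite big_ord_recl big_ord0 addr0 Ssum0 big_geq //; lia.
rewrite big_ord_recl Ssum0 (tele (erefl (N - a)%N)); congr (_ + _).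
under eq_bigr => k _ do rewrite /= SsumS.
rewrite exchange_big /= big_geq_mkord /=.
apply: eq_big => [i|i Hai]; first by [].
by rewrite -mulr_sumr IH //; lia.
Qed.

End Expand.
Section RHS.
Variables (R : realType) (d N : nat) (c : R).
Hypothesis hd : (0 < d)%N.
Local Notation St := ('I_d * bool)%type.
Local Notation D := (((2 * d)%N)%:R : R).

Definition Zval : R :=
  \sum_(u : N.-tuple St) \sum_(v : N.-tuple St)
    (D ^+ N)^-1 ^+ 2 * (sqnorm R (pos u N) * sqnorm R (pos v N)) *
    \prod_(1 <= n < N.+1) (1 + c ^+ 2 * (pos u n == pos v n)%:R).

Lemma nth_cons_last (T : Type) (x0 : T) s : nth x0 (x0 :: s) (size s) = last x0 s.
Proof. by have := nth_last x0 (x0 :: s). Qed.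

Lemma prod_scale (I : Type) (s : seq I) (a : R) (F : I -> R) :
  \prod_(j <- s) (a * F j) = a ^+ size s * \prod_(j <- s) F j.
Proof.
elim: s => [|j s IH]; first by rewrite !big_nil expr0 mulr1.
by rewrite !big_cons IH /= exprS; ring.
Qed.

Lemma Tval_Mk js xs : size js = size xs -> path ltn 0 js -> all (fun j => j <= N)%N js ->
  Tval R N js xs = @Mk R d N 0 0 js xs.
Proof.
move=> Hs Hp Ha; rewrite -markov // subn0 /Tval; congr (_ * _).
apply: SW_ext => l _; rewrite add0r; congr (_ * _).
by apply: eq_bigr => p _; rewrite add0r subn0.
Qed.

Lemma term_eq n (t : n.-tuple 'I_N.+1) :
  sorted ltn (0%N :: map (@nat_of_ord N.+1) t) ->
  ((c ^+ (2 * n))%:E *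
        \esum_(xs in [set: n.-tuple 'rV[int]_d])
          ((\prod_(1 <= k < n.+1)
               p0 R (iext t k - iext t k.-1) (xext xs k - xext xs k.-1) ^+ 2)%:E *
           ((\esum_(y in [set: 'rV[int]_d])
               (sqnorm R y * p0 R (N - iext t n) (y - xext xs n))%:E) *
            (\esum_(y in [set: 'rV[int]_d])
               (sqnorm R y * p0 R (N - iext t n) (y - xext xs n))%:E))))%E
  = (c ^+ (2 * n) * \sum_(u : N.-tuple St) \sum_(v : N.-tuple St)
     (D ^+ N)^-1 ^+ 2 * (sqnorm R (pos u N) * sqnorm R (pos v N)) *
     \prod_(j <- map (@nat_of_ord N.+1) t) (pos u j == pos v j)%:R)%:E.
Proof.
move=> Hsort.
set js := map (@nat_of_ord N.+1) t.
have Hjs : size js = n by rewrite size_map size_tuple.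
have Hall : all (fun j => j <= N)%N js.
  by apply/allP => j /mapP [i _ ->]; rewrite -ltnS ltn_ord.
rewrite (eq_esum (b := fun xs : n.-tuple 'rV[int]_d => ((Tval R N js xs) ^+ 2)%:E)).
  by rewrite (esum_T R d N Hjs) -EFinM.
move=> xs _.
have Hs : size js = size xs by rewrite Hjs size_tuple.
rewrite Tval_Mk // (Mk_prod _ _ _ _ Hs).
have Hi : iext t n = last 0%N js.
  by rewrite /iext; have := nth_cons_last 0%N js; rewrite Hjs.
have Hx : xext xs n = last 0 (val xs).
  by rewrite /xext; have := nth_cons_last 0 (val xs); rewrite size_tuple.
rewrite Hi Hx esum_B // -!EFinM; congr (_%:E).
rewrite Hjs /= prodrXl; ring.
Qed.

Lemma rhs3_Z : rhs3 d N c = (Zval)%:E.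
Proof.
rewrite /rhs3.
under eq_bigr => n _.
  under eq_bigr => t Ht do rewrite (term_eq Ht).
  rewrite sumEFin.
  over.
rewrite sumEFin /Zval; congr (_%:E).
rewrite big_mkord; symmetry.
under eq_bigr => u _.
  under eq_bigr => v _ do rewrite -(@expand R N (fun n => c ^+ 2 * (pos u n == pos v n)%:R) N 0 (leq_subr 0 N)) mulr_sumr.
  rewrite exchange_big.
  over.
rewrite exchange_big; apply: eq_bigr => k _.
under eq_bigr => u _.
  under eq_bigr => v _ do rewrite /Ssum mulr_sumr.
  rewrite exchange_big.
  over.
rewrite exchange_big /=; apply: eq_bigr => t _.
rewrite mulr_sumr; apply: eq_bigr => u _; rewrite mulr_sumr; apply: eq_bigr => v _.
by rewrite prod_scale size_map size_tuple exprM; ring.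
Qed.

End RHS.
Section Measure.
Variables (R : realType) (dm : measure_display) (Omega : measurableType dm)
  (Q : probability Omega R) (d : nat) (h : nat -> 'rV[int]_d -> Omega -> R).
Hypothesis mh : forall n x, measurable_fun setT (h n x).
Hypothesis hpm : forall n x w, h n x w = 1 \/ h n x w = -1.
Hypothesis hjoint : forall (s : seq (nat * 'rV[int]_d)) (e : nat * 'rV[int]_d -> bool),
  uniq s ->
  Q [set w | forall i, i \in s -> h i.1 i.2 w = (if e i then 1 else -1)]
  = ((2 : R) ^- size s)%:E.

Local Notation I := (nat * 'rV[int]_d)%type.
Variable s : seq I.
Hypothesis us : uniq s.
Local Notation m := (size s).
Definition i0 : I := (0%N, 0).

Definition ev (e : {ffun 'I_m -> bool}) (i : I) : bool := nth false (fgraph e) (index i s).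

Definition vvec (w : Omega) : {ffun 'I_m -> bool} :=
  [ffun k : 'I_m => h (nth i0 s k).1 (nth i0 s k).2 w == 1].

Lemma ev_ord e i (Hi : (index i s < m)%N) : ev e i = e (Ordinal Hi).
Proof. exact: (nth_fgraph_ord false (Ordinal Hi) e). Qed.

Lemma ev_nth e (k : 'I_m) : ev e (nth i0 s k) = e k.
Proof.
have Hi : (index (nth i0 s k) s < m)%N by rewrite index_uniq.
rewrite (ev_ord e Hi); congr (e _); apply: val_inj => /=; exact: index_uniq.
Qed.

Lemma m1_neq1 : ((-1 : R) == 1) = false.
Proof. by apply/negbTE/negP => /eqP H; lra. Qed.

Lemma h_vvec w i : i \in s -> h i.1 i.2 w = if ev (vvec w) i then 1 else -1.
Proof.
move=> Hi; have Hk : (index i s < m)%N by rewrite index_mem.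
rewrite (ev_ord (vvec w) Hk) ffunE /= nth_index //.
by case: (hpm i.1 i.2 w) => ->; rewrite ?eqxx ?m1_neq1.
Qed.

Definition Aset (e : {ffun 'I_m -> bool}) : set Omega :=
  [set w | forall i, i \in s -> h i.1 i.2 w = (if ev e i then 1 else -1)].

Lemma Aset_vvec e w : (w \in Aset e) = (vvec w == e).
Proof.
apply/idP/eqP.
  move=> /set_mem H; apply/ffunP => k; rewrite ffunE.
  rewrite H ?mem_nth // ev_nth.
  by case: (e k); rewrite ?eqxx ?m1_neq1.
move=> <-; apply: mem_set => i Hi; exact: h_vvec.
Qed.

Lemma meas_forall (r : seq I) (val : I -> R) :
  measurable [set w | forall i, i \in r -> h i.1 i.2 w = val i].
Proof.
elim: r => [|j r IH].
  rewrite (_ : [set w | _] = setT); first exact: measurableT.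
  by apply/seteqP; split => w //= _ i; rewrite in_nil.
rewrite (_ : [set w | _] = (h j.1 j.2 @^-1` [set val j]) `&`
    [set w | forall i, i \in r -> h i.1 i.2 w = val i]).
  apply: measurableI => //.
  have := mh j.1 j.2 measurableT (measurable_set1 (val j)); by rewrite setTI.
apply/seteqP; split => w /=.
  move=> H; split; first by apply: H; rewrite mem_head.
  by move=> i Hi; apply: H; rewrite in_cons Hi orbT.
move=> [H1 H2] i; rewrite in_cons => /orP [/eqP -> //|Hi]; exact: H2.
Qed.

Lemma meas_Aset e : measurable (Aset e).
Proof. exact: (meas_forall s (fun i => if ev e i then 1 else -1)). Qed.

Lemma Q_Aset e : Q (Aset e) = ((2 : R) ^- m)%:E.
Proof. exact: (hjoint (ev e) us). Qed.

Lemma integral_fin (G : {ffun 'I_m -> bool} -> R) : (forall e, 0 <= G e) ->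
  (\int[Q]_w (G (vvec w))%:E = ((2 : R) ^- m * \sum_e G e)%:E)%E.
Proof.
move=> G0.
rewrite (eq_integral (fun w => \sum_e (G e * \1_(Aset e) w)%:E)); last first.
  move=> w _; rewrite sumEFin; congr (_%:E).
  rewrite (bigD1 (vvec w)) //= big1 ?addr0.
    by rewrite indicE Aset_vvec eqxx mulr1.
  by move=> e He; rewrite indicE Aset_vvec eq_sym (negbTE He) mulr0.
rewrite ge0_integral_sum //; last first.
- by move=> e w _; rewrite lee_fin mulr_ge0 // indicE ler0n.
- move=> e; apply/measurable_realfun.measurable_EFinP.
  apply: measurable_realfun.measurable_funM; first exact: measurable_cst.
  exact: measurable_realfun.measurable_indic (meas_Aset e).
rewrite (eq_bigr (fun e => (G e)%:E * ((2 : R) ^- m)%:E)%E); last first.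
  move=> e _.
  rewrite (@integralZl_indic _ _ _ Q setT measurableT (fun _ => Aset e) (G e)).
  - rewrite integral_indic //; last exact: meas_Aset.
    by rewrite setIT; congr (_ * _)%E; exact: Q_Aset.
  - by move=> Hlt; have := G0 e; rewrite leNgt Hlt.
  - exact: meas_Aset.
by rewrite sumEFin mulr_sumr; congr (_%:E); apply: eq_bigr => e _; rewrite mulrC.
Qed.

End Measure.
Section Indep.
Variables (R : realType) (d : nat) (s : seq (nat * 'rV[int]_d)).
Hypothesis us : uniq s.
Local Notation I := (nat * 'rV[int]_d)%type.
Definition sg (b : bool) : R := if b then 1 else -1.

Lemma RI (t : seq I) (F : I -> R) : uniq t -> {subset t <= s} ->
  \prod_(i <- t) F i =
  \prod_(k < size s) (if nth (i0 d) s k \in t then F (nth (i0 d) s k) else 1).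
Proof.
move=> ut st.
have Hp : perm_eq t [seq i <- s | i \in t].
  apply: uniq_perm => //; first by rewrite filter_uniq.
  move=> i; rewrite mem_filter; case Hi: (i \in t) => //=; by rewrite (st _ Hi).
by rewrite (perm_big _ Hp) big_filter (big_nth (i0 d)) big_mkord big_mkcond.
Qed.

Lemma indep_fin (t : seq I) (phi : I -> R -> R) : uniq t -> {subset t <= s} ->
  \sum_(e : {ffun 'I_(size s) -> bool}) \prod_(i <- t) phi i (sg (ev e i)) =
  2 ^+ size s * \prod_(i <- t) ((phi i 1 + phi i (-1)) / 2).
Proof.
move=> ut st.
rewrite (eq_bigr (fun e : {ffun 'I_(size s) -> bool} => \prod_(k < size s)
   (if nth (i0 d) s k \in t then phi (nth (i0 d) s k) (sg (e k)) else 1))); last first.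
  move=> e _; rewrite (RI (fun i => phi i (sg (ev e i))) ut st).
  by apply: eq_bigr => k _; rewrite (ev_nth us).
rewrite -(bigA_distr_bigA (fun (k : 'I_(size s)) (b : bool) =>
   if nth (i0 d) s k \in t then phi (nth (i0 d) s k) (sg b) else 1)) /=.
have E2 : (2 : R) ^+ size s = \prod_(k < size s) 2 by rewrite prodr_const card_ord.
rewrite (RI (fun i => (phi i 1 + phi i (-1)) / 2) ut st) E2 -big_split /=.
apply: eq_bigr => k _; rewrite big_bool /=.
case: ifP => _; by field.
Qed.

Lemma block_prod (N : nat) (c : R) (a b : nat -> 'rV[int]_d) :
  (forall n, (0 < n <= N)%N -> (n, a n) \in s /\ (n, b n) \in s) ->
  \sum_(e : {ffun 'I_(size s) -> bool}) \prod_(1 <= n < N.+1)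
     ((1 + c * sg (ev e (n, a n))) * (1 + c * sg (ev e (n, b n)))) =
  2 ^+ size s * \prod_(1 <= n < N.+1) (1 + c ^+ 2 * (a n == b n)%:R).
Proof.
move=> Hs.
pose blk n : seq I := if a n == b n then [:: (n, a n)] else [:: (n, a n); (n, b n)].
pose t := flatten [seq blk n | n <- index_iota 1 N.+1].
pose phi (i : I) (v : R) := if a i.1 == b i.1 then (1 + c * v) ^+ 2 else 1 + c * v.
have Eprod : forall F : I -> R,
    \prod_(i <- t) F i = \prod_(1 <= n < N.+1) \prod_(i <- blk n) F i.
  by move=> F; rewrite big_flatten big_map.
have blk_fst : forall n y, y \in blk n -> y.1 = n.
  move=> n y; rewrite /blk; case: ifP => _; rewrite !inE.
    by move/eqP ->.
  by case/orP => /eqP ->.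
have blk_uniq : forall n, uniq (blk n).
  move=> n; rewrite /blk; case: eqVneq => H //=.
  by rewrite inE xpair_eqE eqxx (negbTE H).
have fl_uniq : forall r, uniq r -> uniq (flatten [seq blk n | n <- r]).
  elim=> [|n r IH] //= /andP [Hn Hr].
  rewrite cat_uniq blk_uniq IH // andbT /=.
  apply/hasPn => y /flatten_mapP [n' Hn' Hy]; apply/negP => Hy'.
  have e1 := blk_fst _ _ Hy; have e2 := blk_fst _ _ Hy'.
  by move: Hn; rewrite -e2 e1 Hn'.
have ut : uniq t by apply: fl_uniq; exact: iota_uniq.
have st : {subset t <= s}.
  move=> y /flatten_mapP [n Hn Hy]; rewrite mem_index_iota in Hn.
  have [Ha Hb] := Hs n Hn; move: Hy; rewrite /blk; case: ifP => _; rewrite !inE.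
    by move/eqP ->.
  by case/orP => /eqP ->.
rewrite (eq_bigr (fun e => \prod_(i <- t) phi i (sg (ev e i)))); last first.
  move=> e _; rewrite Eprod; apply: eq_bigr => n _; rewrite /blk /phi.
  case: (eqVneq (a n) (b n)) => H.
    by rewrite big_cons big_nil /= H eqxx mulr1 expr2.
  by rewrite !big_cons big_nil /= (negbTE H) mulr1.
rewrite indep_fin //; congr (_ * _); rewrite Eprod; apply: eq_bigr => n _.
rewrite /blk /phi; case: (eqVneq (a n) (b n)) => H.
  by rewrite big_cons big_nil /= H eqxx /=; field.
by rewrite !big_cons big_nil /= (negbTE H) /=; field.
Qed.

End Indep.

Unset Implicit Arguments.

Theorem lemma3 (R : realType) (dm : measure_display) (Omega : measurableType dm)
  (Q : probability Omega R) (d : nat) (c : nat -> R)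
  (h : nat -> 'rV[int]_d -> Omega -> R) (N : nat) :
  (d = 1%N \/ d = 2%N) ->
  (forall M, 0 < c M) ->
  (d = 1%N -> (fun M : nat => c M ^+ 2 * Num.sqrt (M%:R : R)) @ \oo --> (0 : R)) ->
  (d = 2%N -> (fun M : nat => c M ^+ 2 * ln (M%:R : R)) @ \oo --> (0 : R)) ->
  iid_pm1 Q h ->
  (1 <= N)%N ->
  (\int[Q]_w ((Kfun (c N) h N w) ^+ 2)%:E)%E = rhs3 d N (c N).
Proof.
move=> Hd _ _ _ [mh hpm hjoint] HN.
have hd : (0 < d)%N by case: Hd => ->.
rewrite (rhs3_Z N (c N) hd).
set cc := c N.
pose s : seq (nat * 'rV[int]_d) := undup (flatten (map
  (fun u : N.-tuple ('I_d * bool) =>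
     [seq (n, pos (u : seq ('I_d * bool)) n) | n <- index_iota 1 N.+1])
  (index_enum (N.-tuple ('I_d * bool))))).
have us : uniq s by exact: undup_uniq.
have mem_s : forall (u : N.-tuple ('I_d * bool)) n, (0 < n <= N)%N -> (n, pos u n) \in s.
  move=> u n Hn; rewrite mem_undup; apply/flatten_mapP; exists u; first exact: mem_index_enum.
  by apply: (map_f (fun n => (n, pos u n))); rewrite mem_index_iota.
pose Ke (e : {ffun 'I_(size s) -> bool}) : R := (((2 * d)%N%:R : R) ^+ N)^-1 *
  \sum_(u : N.-tuple ('I_d * bool))
    (\prod_(1 <= n < N.+1) (1 + cc * sg R (ev e (n, pos u n)))) * sqnorm R (pos u N).
have key : forall w, Kfun cc h N w = Ke (vvec h s w).
  move=> w; rewrite /Kfun /Ke natrX; congr (_ * _).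
  pose G := (fun l : seq ('I_d * bool) =>
     (\prod_(1 <= n < N.+1) (1 + cc * h n (pos l n) w)) * sqnorm R (pos l N)).
  rewrite (eq_bigr (fun f => G (val (fgraph f)))); last first.
    by move=> f _; rewrite /G wpos_pos; congr (_ * _); apply: eq_bigr => n _; rewrite wpos_pos.
  rewrite (SW_ffun N G) -(SW_tuple N G) /G; apply: eq_bigr => u _; congr (_ * _).
  rewrite big_seq [RHS]big_seq; apply: eq_bigr => n; rewrite mem_index_iota => Hn.
  by rewrite (h_vvec hpm w (mem_s u n Hn)).
rewrite (eq_integral (fun w => ((Ke (vvec h s w)) ^+ 2)%:E)); last first.
  by move=> w _; rewrite key.
have H0 : forall e, 0 <= (Ke e) ^+ 2 by move=> e; exact: sqr_ge0.
rewrite (integral_fin mh hpm hjoint us H0).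
congr (_%:E); rewrite /Ke.
under eq_bigr => e _ do rewrite sq_sum.
rewrite exchange_big; under eq_bigr => u _ do rewrite exchange_big.
rewrite mulr_sumr /Zval; apply: eq_bigr => u _; rewrite mulr_sumr; apply: eq_bigr => v _.
rewrite (eq_bigr (fun e : {ffun 'I_(size s) -> bool} =>
   (((2 * d)%N%:R : R) ^+ N)^-1 ^+ 2 * (sqnorm R (pos u N) * sqnorm R (pos v N)) *
   \prod_(1 <= n < N.+1) ((1 + cc * sg R (ev e (n, pos u n))) *
                          (1 + cc * sg R (ev e (n, pos v n)))))); last first.
  by move=> e _; rewrite big_split /=; ring.
rewrite -mulr_sumr (@block_prod R d s us N cc (fun n => pos u n) (fun n => pos v n)); last first.
  by move=> n Hn; split; apply: mem_s.
have h2 : (2 : R) != 0 by rewrite pnatr_eq0.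
by rewrite mulrCA mulKf // expf_neq0.
Qed.
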